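(* Let $(\eta_k)_{k\in\mathbb{N}}$ be independent random variables with values in $\mathbb{N}$, $P(\eta_k=i)=p_{ik}$ with $p_{ik}\ge0$ and $\sum_{i=1}^\infty p_{ik}=1$ for all $k$, and suppose there exists $i_0\in\mathbb{N}$ with $\sum_{k=1}^\infty p_{i_0k}=+\infty$. Let $$\eta=\sum_{k=1}^\infty\frac{(-1)^{k-1}}{\eta_1(\eta_1+\eta_2)\cdots(\eta_1+\eta_2+\dots+\eta_k)}.$$ Then: (1) $\eta$ has a purely discrete distribution if and only if $\prod_{k=1}^\infty\max_i p_{ik}>0$; (2) in all other cases $\eta$ has a singularly continuous distribution. *)

(* Defs.v *)
From HB Require Import structures.
From mathcomp Require Import all_boot all_order all_algebra.
From mathcomp Require Import all_classical all_reals all_analysis.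
Set Implicit Arguments. Unset Strict Implicit. Unset Printing Implicit Defensive.
Import Order.TTheory GRing.Theory Num.Theory.
Import numFieldNormedType.Exports.
Local Open Scope classical_set_scope.
Local Open Scope ring_scope.

Section Defs.
Context {d : measure_display} {T : measurableType d} {R : realType}.
Variable P : probability T R.

(* Mutual independence of the nat-valued (discrete) random variables
   eta_k : every finite subfamily satisfies the product rule for arbitrary
   events {eta_k \in A_k} (every subset of nat is measurable). *)
Definition mutually_independent (eta : nat -> T -> nat) : Prop :=
  forall (F : seq nat) (A : nat -> set nat), uniq F ->
    P [set w | forall k, k \in F -> A k (eta k w)] =
    (\prod_(k <- F) P [set w | A k (eta k w)])%E.

Definition pik (eta : nat -> T -> nat) (i k : nat) : \bar R :=
  P [set w | eta k w = i].

(* max_i p_{ik} (as a supremum, which is attained) *)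
Definition pmax (eta : nat -> T -> nat) (k : nat) : \bar R :=
  ereal_sup (range (fun i => pik eta i k)).

(* the infinite product prod_{k>=1} max_i p_{ik} (limit of partial products,
   which exists since the partial products are nonincreasing in [0,1]) *)
Definition prod_pmax (eta : nat -> T -> nat) : \bar R :=
  limn (fun n => (\prod_(k < n) pmax eta k)%E).

(* eta = sum_{k>=1} (-1)^(k-1) / (eta_1 (eta_1+eta_2) ... (eta_1+...+eta_k)),
   with indices shifted to start at 0. *)
Definition eta_denom (eta : nat -> T -> nat) (k : nat) (w : T) : R :=
  \prod_(j < k.+1) ((\sum_(l < j.+1) eta l w)%N)%:R.

Definition eta_sum (eta : nat -> T -> nat) (w : T) : R :=
  limn (series (fun k => (-1) ^+ k / eta_denom eta k w)).

Definition purely_discrete_distr (X : T -> R) : Prop :=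
  exists C : set R, countable C /\ P (X @^-1` C) = 1%E.

Definition singular_continuous_distr (X : T -> R) : Prop :=
  (forall x : R, P (X @^-1` [set x]) = 0%E) /\
  exists N : set R, measurable N /\ (@lebesgue_measure R) N = 0%E /\
    P (X @^-1` N) = 1%E.

End Defs.

(* Main.v *)
Require Import Defs.
From HB Require Import structures.
From mathcomp Require Import all_boot all_order all_algebra.
From mathcomp Require Import all_classical all_reals all_analysis.
From mathcomp Require Import ring lra.
Import Order.TTheory GRing.Theory Num.Theory.
Import numFieldNormedType.Exports.
Local Open Scope classical_set_scope.
Local Open Scope ring_scope.

Set Implicit Arguments. Unset Strict Implicit.



Section Ostro.
Variable R : realType.

Definition incr (q : nat -> nat) := (0 < q 0)%N /\ forall j, (q j < q j.+1)%N.
Definition wt (q : nat -> nat) (k : nat) : R :=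
  (-1) ^+ k / (\prod_(j < k.+1) (q j)%:R).
Definition W q := limn (series (wt q)).
Definition sh (q : nat -> nat) j := q j.+1.

Lemma incr_sh q : incr q -> incr (sh q).
Proof. by move=> [q0 qS]; split; [apply: leq_ltn_trans (qS 0%N) | move=> j; exact: qS]. Qed.

Lemma incr_ge q : incr q -> forall j, (j < q j)%N.
Proof.
move=> [q0 qS]; elim=> [//|j IH]; exact: leq_ltn_trans IH (qS j).
Qed.

Lemma prod_ge q : incr q -> forall k, (2 ^ k <= \prod_(j < k.+1) q j)%N.
Proof.
move=> iq; elim=> [|k IH].
  by rewrite big_ord1 expn0; case: iq.
rewrite big_ord_recr /= expnSr leq_mul //.
by apply: leq_ltn_trans _ (incr_ge iq k.+1).
Qed.

Lemma prod_gt0 q : incr q -> forall k, 0 < \prod_(j < k.+1) (q j)%:R :> R.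
Proof.
move=> iq k; rewrite -natr_prod ltr0n.
by apply: leq_trans (prod_ge iq k); rewrite expn_gt0.
Qed.

Lemma wt_norm q : incr q -> forall k, `|wt q k| <= (2^-1) ^+ k.
Proof.
move=> iq k; rewrite /wt normrM normrX normrN1 expr1n mul1r normfV.
rewrite ger0_norm; last exact/ltW/prod_gt0.
rewrite exprVn lef_pV2 ?posrE ?prod_gt0 ?exprn_gt0 //.
by rewrite -natr_prod -natrX ler_nat prod_ge.
Qed.

Lemma wt_cvg q : incr q -> cvgn (series (wt q)).
Proof.
move=> iq; apply: normed_cvg.
apply: (@series_le_cvg _ _ (geometric 1 (2^-1))).
- by move=> n; exact: normr_ge0.
- by move=> n; rewrite /geometric /= mul1r exprn_ge0 // invr_ge0.
- by move=> n; rewrite /geometric /= mul1r wt_norm.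
- by apply: is_cvg_geometric_series; rewrite ger0_norm ?invr_ge0 // invf_lt1 // ltr1n.
Qed.

Lemma wt0 q : wt q 0 = (q 0)%:R^-1.
Proof. by rewrite /wt big_ord1 expr0 mul1r. Qed.

Lemma wtS q k : wt q k.+1 = - ((q 0)%:R^-1 * wt (sh q) k).
Proof.
rewrite /wt big_ord_recl /= exprS invfM /sh.
by rewrite mulN1r mulNr mulrCA.
Qed.

Lemma seriesS_sh q n : series (wt q) n.+1 = (q 0)%:R^-1 * (1 - series (wt (sh q)) n).
Proof.
rewrite !seriesEord /= big_ord_recl wt0.
have -> : \sum_(i < n) wt q (lift ord0 i) = \sum_(i < n) - ((q 0)%:R^-1 * wt (sh q) i).
  by apply: eq_bigr => i _; rewrite lift0 wtS.
by rewrite sumrN -mulr_sumr mulrBr mulr1.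
Qed.

Lemma W_S q : incr q -> W q = (q 0)%:R^-1 * (1 - W (sh q)).
Proof.
move=> iq; apply: cvg_lim => //.
rewrite -cvg_shiftS /=.
under eq_fun do rewrite seriesS_sh.
apply: cvgM; first exact: cvg_cst.
apply: cvgB; first exact: cvg_cst.
exact/wt_cvg/incr_sh.
Qed.


Lemma natr_ge1 (n : nat) : (0 < n)%N -> 1 <= n%:R :> R.
Proof. by move=> h; rewrite ler1n. Qed.

Lemma series_bnd n : forall q, incr q ->
  0 <= series (wt q) n <= (q 0)%:R^-1.
Proof.
elim: n => [|n IH] q iq.
  by rewrite seriesEord /= big_ord0 lexx invr_ge0 ler0n.
have iq' := incr_sh iq.
have /andP[s0 s1] := IH _ iq'.
rewrite seriesS_sh.
have q1 : 1 <= (q 1)%:R :> R by rewrite natr_ge1 //; case: iq'.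
have q0 : 1 <= (q 0)%:R :> R by rewrite natr_ge1 //; case: iq.
move: s1; rewrite /sh => s1.
have hi : (q 1)%:R^-1 <= 1 :> R by rewrite invf_le1 //; lra.
have hp : 0 < (q 0)%:R^-1 :> R by rewrite invr_gt0; lra.
apply/andP; split; first by apply: mulr_ge0; lra.
rewrite ler_piMr //; lra.
Qed.

Lemma W_bnd q : incr q -> 0 <= W q <= (q 0)%:R^-1.
Proof.
move=> iq; apply/andP; split.
  apply: limr_ge; first exact: wt_cvg.
  by apply: nearW => n; have /andP[] := series_bnd n iq.
apply: limr_le; first exact: wt_cvg.
by apply: nearW => n; have /andP[] := series_bnd n iq.
Qed.

Lemma q1_ge2 q : incr q -> 2 <= (q 1)%:R :> R.
Proof. by move=> iq; rewrite ler_nat; apply: leq_ltn_trans _ (incr_ge iq 1). Qed.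

Lemma q0_ge1 q : incr q -> 1 <= (q 0)%:R :> R.
Proof. by case=> h _; rewrite natr_ge1. Qed.

Lemma q01 q : incr q -> (q 0)%:R + 1 <= (q 1)%:R :> R.
Proof. by case=> _ h; rewrite natr1 ler_nat; exact: h. Qed.

Lemma W_pos q : incr q -> 0 < W q.
Proof.
move=> iq; rewrite W_S //.
have /andP[_ h] := W_bnd (incr_sh iq).
have h2 := q1_ge2 iq; have h1 := q0_ge1 iq.
move: h; rewrite /sh => h.
have : (q 1)%:R^-1 < 1 :> R by rewrite invf_lt1; lra.
move=> h3; apply: mulr_gt0; first by rewrite invr_gt0; lra.
lra.
Qed.

Lemma W_ub q : incr q -> W q < (q 0)%:R^-1.
Proof.
move=> iq; rewrite W_S //.
have h := W_pos (incr_sh iq).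
have h1 := q0_ge1 iq.
rewrite gtr_pMr ?invr_gt0; lra.
Qed.

Lemma W_lb q : incr q -> ((q 0)%:R + 1)^-1 < W q.
Proof.
move=> iq; rewrite W_S //.
have h := W_pos (incr_sh iq).
have h' := W_ub (incr_sh iq).
have h1 := q0_ge1 iq; have h01 := q01 iq.
move: h'; rewrite /sh => h'.
have h2 : (q 1)%:R^-1 <= ((q 0)%:R + 1)^-1 :> R.
  by rewrite lef_pV2 ?posrE; lra.
set x := (q 0)%:R in h1 h2 *.
set s := W _ in h h' *.
have hx : 0 < x by lra.
have e1 : (x+1)^-1 = x^-1 * (1 - (x+1)^-1) by field; lra.
rewrite e1 ltr_pM2l ?invr_gt0 //; lra.
Qed.

Lemma W_digit q (b : nat) : incr q -> (0 < b)%N ->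
  (b%:R + 1)^-1 < W q -> W q < b%:R^-1 -> q 0 = b.
Proof.
move=> iq b0 h1 h2.
have hl := W_lb iq; have hu := W_ub iq; have hq := q0_ge1 iq.
have hb : 1 <= b%:R :> R by rewrite natr_ge1.
case: (ltngtP (q 0) b) => // hqb.
- exfalso; have : (q 0)%:R + 1 <= b%:R :> R by rewrite natr1 ler_nat.
  move=> h; have : b%:R^-1 <= ((q 0)%:R + 1)^-1 :> R by rewrite lef_pV2 ?posrE; lra.
  lra.
- exfalso; have : b%:R + 1 <= (q 0)%:R :> R by rewrite natr1 ler_nat.
  move=> h; have : (q 0)%:R^-1 <= (b%:R + 1)^-1 :> R by rewrite lef_pV2 ?posrE; lra.
  lra.
Qed.

Lemma W_inj n : forall q q', incr q -> incr q' -> W q = W q' -> q n = q' n.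
Proof.
elim: n => [|n IH] q q' iq iq' e.
  apply: (W_digit iq); first by case: iq'.
  - by rewrite e; exact: W_lb.
  - by rewrite e; exact: W_ub.
have e0 : q 0 = q' 0.
  apply: (W_digit iq); first by case: iq'.
  - by rewrite e; exact: W_lb.
  - by rewrite e; exact: W_ub.
apply: (IH (sh q) (sh q') (incr_sh iq) (incr_sh iq')).
move: e; rewrite (W_S iq) (W_S iq') e0 => e.
have hq0 : (q' 0)%:R^-1 != 0 :> R.
  by rewrite invr_eq0 pnatr_eq0 -lt0n; case: iq'.
have := mulfI hq0 e; lra.
Qed.

End Ostro.
Arguments W {R}. Arguments wt {R}.
Arguments W_S {R} [q]. Arguments W_lb {R} [q]. Arguments W_ub {R} [q].
Arguments W_pos {R} [q]. Arguments W_bnd {R} [q]. Arguments W_inj {R} n [q q'].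
Arguments W_digit {R} [q b]. Arguments wt_cvg {R} [q].



Section Scale.
Variables (R : realType) (b : R).
Hypothesis hb : 0 < b.
Definition aff (x : R) := 1 - b * x.

Lemma aff_meas : measurable_fun setT aff.
Proof.
have -> : aff = (cst 1 \- *%R b) by [].
exact: (measurable_realfun.measurable_funB (measurable_cst _) (measurable_realfun.mulrl_measurable b)).
Qed.

Lemma aff_pre (Y : set R) : measurable Y -> measurable (aff @^-1` Y).
Proof. by move=> mY; rewrite -[X in measurable X]setTI; exact: aff_meas. Qed.

Lemma aff_pre' (Y : set (measurableTypeR R)) : measurable Y ->
  measurable (aff @^-1` Y : set (measurableTypeR R)).
Proof. move=> mY; have h : measurable (Y : set R) by exact: mY.
exact: (aff_pre h). Qed.

Definition nu (A : set (measurableTypeR R)) : \bar R := (b%:E * lebesgue_measure (aff @^-1` A))%E.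

Let nu0 : nu set0 = 0%E.
Proof. by rewrite /nu preimage_set0 measure0 mule0. Qed.

Let nu_ge0 A : (0 <= nu A)%E.
Proof. rewrite /nu mule_ge0 //; first by rewrite lee_fin ltW. Qed.

Let nu_sigma : semi_sigma_additive nu.
Proof.
move=> F mF tF mUF; rewrite /nu preimage_bigcup.
rewrite [X in X @ \oo --> _](_ : _ =
    (fun n => b%:E * \sum_(0 <= i < n) lebesgue_measure (aff @^-1` F i)))%E; last first.
  by apply/funext => k; rewrite ge0_sume_distrr.
apply: cvgeZl => //.
apply: measure_semi_sigma_additive.
- by move=> n; exact: aff_pre'.
- apply/trivIsetP => /= i j _ _ ij; rewrite -preimage_setI.
  by move/trivIsetP : tF => /(_ _ _ _ _ ij) ->//; rewrite preimage_set0.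
- by rewrite -preimage_bigcup; exact: aff_pre'.
Qed.

HB.instance Definition _ := isMeasure.Build _ _ _ nu nu0 nu_ge0 nu_sigma.

Lemma nu_itv (l u : R) : l < u -> nu `]l, u]%classic = (u - l)%:E.
Proof.
move=> lu; rewrite /nu.
have -> : aff @^-1` `]l, u]%classic = `[(1 - u) / b, (1 - l) / b[%classic.
  apply/seteqP; split => x /=; rewrite !in_itv /= /aff => /andP[h1 h2];
  apply/andP; split.
  - by rewrite ?ler_pdivrMr ?ler_pdivlMr ?ltr_pdivrMr ?ltr_pdivlMr //; lra.
  - by rewrite ?ler_pdivrMr ?ler_pdivlMr ?ltr_pdivrMr ?ltr_pdivlMr //; lra.
  - by rewrite ?ler_pdivrMr ?ler_pdivlMr ?ltr_pdivrMr ?ltr_pdivlMr // in h1 h2; lra.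
  - by rewrite ?ler_pdivrMr ?ler_pdivlMr ?ltr_pdivrMr ?ltr_pdivlMr // in h1 h2; lra.
rewrite lebesgue_measure_itv /= lte_fin ifT; last first.
  by rewrite ltr_pM2r ?invr_gt0 //; lra.
rewrite -EFinB -EFinM; congr (_%:E); field; exact: lt0r_neq0.
Qed.

Lemma leb_aff (Y : set R) : measurable Y ->
  lebesgue_measure (aff @^-1` Y) = (b^-1%:E * lebesgue_measure Y)%E.
Proof.
move=> mY.
have hoc : forall X, ocitv X -> lebesgue_measure X = nu X.
  move=> X hX; case: ((ocitvP X).1 hX) => [->|[[l u] /= lu ->]]; first by rewrite !measure0.
  by rewrite nu_itv // lebesgue_measure_itv /= lte_fin lu -EFinB.
rewrite (@lebesgue_measure_unique R nu hoc Y mY).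
rewrite /= /nu muleA -EFinM mulVf ?mul1e //; exact: lt0r_neq0.
Qed.
End Scale.



Section Sets.
Variables (R : realType) (i0 : nat).
Hypothesis hi0 : (0 < i0)%N.

Fixpoint Sg (k a : nat) : set R :=
  if k is k'.+1 then \bigcup_(b in [set b : nat | (a < b)%N]) (aff b%:R @^-1` Sg k' b)
  else `](((a + i0)%:R + 1)^-1), ((a + i0)%:R^-1)[%classic.

Fixpoint gap (k a : nat) (q : nat -> nat) : nat :=
  if k is k'.+1 then gap k' (q 0) (sh q) else (q 0 - a)%N.

Lemma aff_in (b : nat) (x : R) : (0 < b)%N -> 0 < aff b%:R x < (b%:R+1)^-1 ->
  (b%:R+1)^-1 < x < b%:R^-1.
Proof.
rewrite /aff => b0 /andP[h1 h2].
have hb : 1 <= b%:R :> R by rewrite ler1n.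
set y := b%:R in hb h1 h2 *.
have e1 : (y + 1)^-1 * (y + 1) = 1 by rewrite mulVf //; lra.
have e2 : y^-1 * y = 1 by rewrite mulVf //; lra.
apply/andP; split.
  rewrite -(ltr_pM2l (_ : 0 < y)); last by lra.
  nra.
rewrite -(ltr_pM2l (_ : 0 < y)); last by lra.
nra.
Qed.

Lemma Sg_sub k : forall a x, Sg k a x -> 0 < x < (a%:R + 1)^-1.
Proof.
elim: k => [|k IH] a x /=.
  rewrite in_itv /= => /andP[h1 h2].
  have hc : a%:R + 1 <= (a + i0)%:R :> R by rewrite natr1 ler_nat -[a.+1]addn1 leq_add2l.
  have ha : 0 <= a%:R :> R by [].
  have hp : 0 < ((a + i0)%:R + 1)^-1 :> R by rewrite invr_gt0; lra.
  have : (a + i0)%:R^-1 <= (a%:R + 1)^-1 :> R by rewrite lef_pV2 ?posrE; lra.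
  by move=> h; apply/andP; split; lra.
move=> [b /= ab hx].
have /andP[h1 h2] := IH _ _ hx.
have b0 : (0 < b)%N by apply: leq_ltn_trans ab.
have /andP[h3 h4] := aff_in b0 (introT andP (conj h1 h2)).
have hc : a%:R + 1 <= b%:R :> R by rewrite natr1 ler_nat.
have ha : 0 <= a%:R :> R by [].
have hp : 0 < (b%:R + 1)^-1 :> R by rewrite invr_gt0; lra.
have : b%:R^-1 <= (a%:R + 1)^-1 :> R by rewrite lef_pV2 ?posrE; lra.
by move=> h; apply/andP; split; lra.
Qed.

Lemma aff_W q : incr q -> aff (q 0)%:R (W q) = W (sh q) :> R.
Proof.
move=> iq; rewrite /aff W_S // mulrA mulfV ?mul1r; first lra.
by rewrite pnatr_eq0 -lt0n; case: iq.
Qed.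

Lemma W_Sg k : forall a q, incr q -> (a < q 0)%N ->
  (Sg k a (W q) <-> gap k a q = i0).
Proof.
elim: k => [|k IH] a q iq aq /=.
  rewrite in_itv /=; split.
    move=> /andP[h1 h2].
    have hb : (0 < a + i0)%N by rewrite addn_gt0 hi0 orbT.
    have -> : q 0 = (a + i0)%N by exact: (W_digit iq hb h1 h2).
    by rewrite addKn.
  move=> h; have -> : (a + i0)%N = q 0 by rewrite -h subnKC // ltnW.
  by rewrite W_lb // W_ub.
split.
  move=> [b /= ab hx].
  have b0 : (0 < b)%N by apply: leq_ltn_trans ab.
  have /andP[h3 h4] := aff_in b0 (Sg_sub hx).
  have eb : q 0 = b by exact: (W_digit iq b0 h3 h4).
  move: hx; rewrite -eb aff_W //.
  move/(IH _ _ (incr_sh iq)); apply.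
  by case: iq => _ h; exact: h.
move=> h; exists (q 0) => //=.
rewrite aff_W //; apply/(IH _ _ (incr_sh iq)) => //.
by case: iq => _ h'; exact: h'.
Qed.

Lemma Sg_meas k : forall a, measurable (Sg k a).
Proof.
elim: k => [|k IH] a /=; first exact: measurable_itv.
apply: bigcup_measurable => b _; exact: aff_pre.
Qed.


Definition gsum (a n : nat) : R :=
  if (a < n)%N then (n%:R * (n%:R + 1) * (n%:R + 2))^-1 else 0.
Definition hsum (n : nat) : R := (n%:R * (n%:R + 1))^-1 / 2.

Lemma sum_tel a N : \sum_(0 <= n < N) gsum a n = hsum a.+1 - hsum (maxn N a.+1).
Proof.
elim: N => [|N IH].
  by rewrite big_geq // max0n subrr.
rewrite big_nat_recr //= IH /gsum.
case: ltnP => aN.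
  have -> : maxn N.+1 a.+1 = N.+1 by apply/maxn_idPl; rewrite ltnS ltnW.
  have -> : maxn N a.+1 = N by apply/maxn_idPl.
  have hN : 1 <= N%:R :> R by rewrite ler1n; apply: leq_ltn_trans aN.
  rewrite /hsum -natr1.
  field; apply/and3P; split; rewrite ?lt0r_neq0 //; lra.
have -> : maxn N.+1 a.+1 = a.+1 by apply/maxn_idPr.
have -> : maxn N a.+1 = a.+1 by apply/maxn_idPr; apply: leq_trans aN _.
by rewrite addr0.
Qed.

Lemma hsum_ge0 n : 0 <= hsum n.
Proof. by rewrite /hsum mulr_ge0 // invr_ge0 mulr_ge0 //; apply: addr_ge0. Qed.

Lemma sum_le a N : \sum_(0 <= n < N) gsum a n <= ((a%:R + 1) * (a%:R + 2))^-1 / 2.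
Proof.
rewrite sum_tel /hsum -natr1.
have := hsum_ge0 (maxn N a.+1); rewrite /hsum => h.
have -> : a%:R + 1 + 1 = a%:R + 2 :> R by rewrite -addrA.
lra.
Qed.

Lemma gsum_ge0 a n : 0 <= gsum a n.
Proof.
rewrite /gsum; case: ifP => // _; rewrite invr_ge0.
Qed.

Lemma Sg0_leb a : (lebesgue_measure (Sg 0 a) <= (((a%:R + 1) * (a%:R + 2))^-1)%:E)%E.
Proof.
have hc : a%:R + 1 <= (a + i0)%:R :> R by rewrite natr1 ler_nat -[a.+1]addn1 leq_add2l.
have ha : 0 <= a%:R :> R by [].
set c := (a + i0)%:R in hc *.
have hc0 : 0 < c by lra.
rewrite /= lebesgue_measure_itv /= lte_fin ifT; last first.
  by rewrite ltf_pV2 ?posrE; lra.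
rewrite -EFinB lee_fin.
have -> : c^-1 - (c + 1)^-1 = (c * (c + 1))^-1.
  by field; apply/andP; split; rewrite lt0r_neq0 //; lra.
rewrite lef_pV2 ?posrE; try nra.
Qed.

Lemma Sg_leb k : forall a,
  (lebesgue_measure (Sg k a) <= ((2^-1)^+k * ((a%:R + 1) * (a%:R + 2))^-1)%:E)%E.
Proof.
elim: k => [|k IH] a.
  by rewrite expr0 mul1r; exact: Sg0_leb.
set F := fun n : nat => if (a < n)%N then aff n%:R @^-1` Sg k n else set0.
have mF : forall n, measurable (F n).
  by move=> n; rewrite /F; case: ifP => _; [apply: aff_pre; exact: Sg_meas|exact: measurable0].
have hsub : Sg k.+1 a `<=` \bigcup_n F n.
  by move=> x [b /= ab hx]; exists b => //; rewrite /F ab.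
have := measure_sigma_subadditive (@lebesgue_measure R) mF (Sg_meas k.+1 a) hsub.
move=> /le_trans; apply.
apply: le_trans (_ : (\sum_(0 <= n <oo) ((2^-1)^+k * gsum a n)%:E <= _)%E).
  apply: lee_nneseries => [n _ _|n _]; first exact: measure_ge0.
  rewrite /F /gsum; case: ifPn => an; last by rewrite measure0 mulr0.
  have n0 : (0 < n)%N by apply: leq_ltn_trans an.
  have hn : 0 < n%:R :> R by rewrite ltr0n.
  have e := leb_aff hn (Sg_meas k n).
  rewrite [leLHS](_ : _ = ((n%:R^-1)%:E * lebesgue_measure (Sg k n))%E); last exact: e.
  apply: le_trans (lee_wpmul2l _ (IH n)) _; first by rewrite lee_fin invr_ge0 ltW.
  rewrite -EFinM lee_fin le_eqVlt; apply/orP; left; apply/eqP.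
  field; apply/and3P; split; rewrite lt0r_neq0 //; lra.
apply: lime_le; first by apply: is_cvg_nneseries => n _ _; rewrite lee_fin mulr_ge0 ?gsum_ge0 // exprn_ge0 // invr_ge0.
apply: nearW => N; rewrite sumEFin lee_fin -mulr_sumr.
apply: le_trans (ler_wpM2l _ (sum_le a N)) _; first by rewrite exprn_ge0 // invr_ge0.
by rewrite exprS le_eqVlt; apply/orP; left; apply/eqP; ring.
Qed.

Lemma geo_sum N : \sum_(0 <= n < N) (2^-1)^+n = 2 - 2 * (2^-1)^+N :> R.
Proof.
elim: N => [|N IH]; first by rewrite big_geq // expr0 mulr1 subrr.
rewrite big_nat_recr //= IH exprS; field; done.
Qed.

Definition Nset := lim_sup_set (fun k => Sg k 0).

Lemma Nset_meas : measurable Nset.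
Proof.
apply: bigcapT_measurable => n; apply: bigcup_measurable => k _; exact: Sg_meas.
Qed.

Lemma Nset_null : lebesgue_measure Nset = 0%E.
Proof.
apply: (lim_sup_set_cvg0 (mu := @lebesgue_measure R)); first by move=> k; exact: Sg_meas.
apply: (@le_lt_trans _ _ 1%:E); last exact: ltry.
apply: (@le_trans _ _ (\sum_(0 <= n <oo) ((2^-1)^+n / 2)%:E)%E).
  apply: lee_nneseries => [n _ _|n _]; first exact: measure_ge0.
  apply: le_trans (Sg_leb n 0) _; rewrite lee_fin le_eqVlt; apply/orP; left; apply/eqP.
  by rewrite mulr0n !add0r mul1r.
apply: (@lime_le _ _ _ R).
  by apply: is_cvg_nneseries => n _ _; rewrite lee_fin mulr_ge0 // exprn_ge0 // invr_ge0.
apply: nearW => N; rewrite sumEFin lee_fin -mulr_suml geo_sum.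
have : 0 <= (2^-1)^+N :> R by rewrite exprn_ge0 // invr_ge0.
lra.
Qed.

End Sets.



Section Prob.
Variables (d : measure_display) (T : measurableType d) (R : realType)
  (P : probability T R) (eta : nat -> T -> nat).
Hypothesis eta_pos : forall k w, (0 < eta k w)%N.
Hypothesis eta_meas : forall k i, measurable [set w | eta k w = i].
Hypothesis eta_indep : mutually_independent P eta.

Definition psumf (e : nat -> nat) : nat -> nat := fun j => (\sum_(l < j.+1) e l)%N.
Definition Q (w : T) := psumf (fun k => eta k w).
Notation X := (@eta_sum _ T R eta).

Lemma incr_psumf e : (forall k, (0 < e k)%N) -> incr (psumf e).
Proof.
move=> ep; split; first by rewrite /psumf big_ord1.
by move=> j; rewrite /psumf [X in (_ < X)%N]big_ord_recr /= -addn1 leq_add2l.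
Qed.

Lemma incrQ w : incr (Q w).
Proof. exact: incr_psumf. Qed.

Lemma X_W w : X w = W (Q w).
Proof. by []. Qed.

Lemma gap_eq k : forall a q, gap k a q = (q k - (if k is k'.+1 then q k' else a))%N.
Proof. by elim: k => [|k IH] a q //=; rewrite IH; case: k IH. Qed.

Lemma psumf0 e : psumf e 0 = e 0.
Proof. by rewrite /psumf big_ord1. Qed.

Lemma psumfS e k : psumf e k.+1 = (psumf e k + e k.+1)%N.
Proof. by rewrite /psumf big_ord_recr. Qed.

Lemma gap_psumf k e : gap k 0 (psumf e) = e k.
Proof. by rewrite gap_eq; case: k => [|k]; rewrite ?psumf0 ?subn0 // psumfS addKn. Qed.

Lemma psumf_inj e e' : (forall n, psumf e n = psumf e' n) -> forall k, e k = e' k.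
Proof.
move=> h [|k]; first by have := h 0%N; rewrite !psumf0.
by have := h k.+1; rewrite !psumfS (h k) => /eqP; rewrite eqn_add2l => /eqP.
Qed.

Lemma X_eq w w0 : X w = X w0 <-> forall k, eta k w = eta k w0.
Proof.
split.
  rewrite !X_W => e; apply: psumf_inj => n; exact: (W_inj n (incrQ w) (incrQ w0) e).
by move=> h; rewrite !X_W /Q; congr W; apply/funext => n; rewrite /psumf;
  apply: eq_bigr => i _; rewrite h.
Qed.

Lemma atom_pre w0 : X @^-1` [set X w0] = \bigcap_k [set w | eta k w = eta k w0].
Proof.
apply/seteqP; split => w /=.
  by move/X_eq => h k _; exact: h.
by move=> h; apply/X_eq => k; exact: h.
Qed.

Lemma atom_meas x : measurable (X @^-1` [set x]).
Proof.
have [[w0 <-]|nex] := pselect (exists w0, X w0 = x).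
  by rewrite atom_pre; apply: bigcapT_measurable => k; exact: eta_meas.
suff -> : X @^-1` [set x] = set0 by exact: measurable0.
by apply/seteqP; split => w //= hw; apply: nex; exists w.
Qed.

Local Open Scope ereal_scope.

Lemma pik_ge0 i k : 0 <= pik P eta i k.
Proof. exact: measure_ge0. Qed.

Lemma pik_le1 i k : pik P eta i k <= 1.
Proof. exact: probability_le1. Qed.

Lemma pik_le_pmax i k : pik P eta i k <= pmax P eta k.
Proof. by apply: ereal_sup_ubound; exists i. Qed.

Lemma pmax_ge0 k : 0 <= pmax P eta k.
Proof. exact: le_trans (pik_ge0 0 k) (pik_le_pmax 0 k). Qed.

Lemma pmax_le1 k : pmax P eta k <= 1.
Proof. by apply: ge_ereal_sup => _ [i _ <-]; exact: pik_le1. Qed.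

Lemma prode_le (s : seq nat) (f g : nat -> \bar R) :
  (forall k, 0 <= f k) -> (forall k, f k <= g k) ->
  \prod_(k <- s) f k <= \prod_(k <- s) g k.
Proof.
move=> f0 fg; elim: s => [|a s IH]; rewrite ?big_nil ?big_cons //.
by apply: lee_pmul => //; exact: prode_ge0.
Qed.

Definition pp n := \prod_(k < n) pmax P eta k.

Lemma pp_ge0 n : 0 <= pp n.
Proof. by apply: prode_ge0 => k _; exact: pmax_ge0. Qed.

Lemma pp_noninc : {homo pp : n m / (n <= m)%N >-> m <= n}.
Proof.
move=> n m nm; rewrite -(subnKC nm); elim: (m - n)%N => [|j IH]; first by rewrite addn0.
apply: le_trans _ IH; rewrite addnS /pp big_ord_recr /=.
rewrite -[X in _ <= X]mule1; apply: lee_pmul => //.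
- exact: pp_ge0.
- exact: pmax_ge0.
- exact: pmax_le1.
Qed.

Lemma prod_pmaxE : prod_pmax P eta = ereal_inf (range pp).
Proof. apply: cvg_lim => //; exact: ereal_nonincreasing_cvgn pp_noninc. Qed.

Lemma pp_iota n : pp n = \prod_(k <- iota 0 n) pmax P eta k.
Proof. by rewrite /pp -(big_mkord xpredT) /index_iota subn0. Qed.

Lemma atom_le x n : P (X @^-1` [set x]) <= pp n.
Proof.
have [[w0 <-]|nex] := pselect (exists w0, X w0 = x); last first.
  suff -> : X @^-1` [set x] = set0 by rewrite measure0 pp_ge0.
  by apply/seteqP; split => w //= hw; apply: nex; exists w.
rewrite atom_pre.
set B := [set w | forall k, k \in iota 0 n -> [set eta k w0] (eta k w)].
have hB := eta_indep (fun k => [set eta k w0]) (iota_uniq 0 n).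
have mB : measurable B.
  have -> : B = \bigcap_k (if k \in iota 0 n then [set w | eta k w = eta k w0] else setT).
    apply/seteqP; split => w /= h k.
      by move=> _; case: ifPn => // kn; exact: h.
    by move=> kn; have := h k I; rewrite kn.
  by apply: bigcapT_measurable => k; case: ifP => _ //; exact: eta_meas.
apply: le_trans (_ : P B <= _).
  apply: le_measure; rewrite ?inE //.
    by apply: bigcapT_measurable => k; exact: eta_meas.
  by move=> w h k _; exact: h.
rewrite hB pp_iota; apply: prode_le => k; [exact: pik_ge0|exact: pik_le_pmax].
Qed.

Lemma atoms0 : ~ (0 < prod_pmax P eta) -> forall x, P (X @^-1` [set x]) = 0.
Proof.
move=> hp x; apply/eqP; rewrite eq_le measure_ge0 andbT.
have h : P (X @^-1` [set x]) <= prod_pmax P eta.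
  by rewrite prod_pmaxE; apply/ereal_infP => _ [n _ <-]; exact: atom_le.
apply: le_trans h _; rewrite leNgt; exact/negP.
Qed.

Lemma not_discrete : (forall x, P (X @^-1` [set x]) = 0) -> ~ purely_discrete_distr P X.
Proof.
move=> h0 [C [cC PC]]; move/countable_injP: cC => [f finj].
set G := fun n => X @^-1` [set x | C x /\ f x = n].
have hG : forall n, measurable (G n) /\ P (G n) = 0.
  move=> n; have [[x0 [Cx0 fx0]]|nex] := pselect (exists x0, C x0 /\ f x0 = n).
    have -> : G n = X @^-1` [set x0].
      apply/seteqP; split => w; rewrite /G /=.
        by move=> [Cw fw]; apply: finj; rewrite ?inE // fw fx0.
      by move=> ->.
    by split; [exact: atom_meas|exact: h0].
  have -> : G n = set0 by apply/seteqP; split => w; rewrite /G //= => hw; apply: nex; exists (X w).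
  by split; [exact: measurable0|exact: measure0].
have e : X @^-1` C = \bigcup_n G n.
  by apply/seteqP; split => w /=; [move=> Cw; exists (f (X w)) | move=> [n _ []]].
have mU : measurable (X @^-1` C) by rewrite e; apply: bigcupT_measurable => n; case: (hG n).
have hs : X @^-1` C `<=` \bigcup_n G n by rewrite e.
have h1 : P (X @^-1` C) <= \sum_(0 <= n <oo) P (G n) :=
  measure_sigma_subadditive P (fun n => (hG n).1) mU hs.
move: h1; rewrite PC eseries0; last by move=> i _ _; exact: (hG i).2.
by rewrite lee_fin ler10.
Qed.

Local Close Scope ereal_scope.

Lemma prod_sum_le (s : seq nat) (f : nat -> R) : (forall k, 0 <= f k <= 1) ->
  (\prod_(k <- s) (1 - f k)) * (1 + \sum_(k <- s) f k) <= 1.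
Proof.
move=> hf; elim: s => [|a s IH]; first by rewrite !big_nil mul1r addr0.
rewrite !big_cons.
have p0 : 0 <= \prod_(k <- s) (1 - f k).
  by apply: prodr_ge0 => k _; have /andP[] := hf k; lra.
have S0 : 0 <= \sum_(k <- s) f k by apply: sumr_ge0 => k _; have /andP[] := hf k.
have /andP[x0 x1] := hf a.
set p := \prod_(k <- s) _ in p0 IH *; set S := \sum_(k <- s) _ in S0 IH *.
have p1 : p <= 1 by nra.
nra.
Qed.

Lemma fin01 (x : \bar R) : (0 <= x)%E -> (x <= 1)%E -> x = (fine x)%:E.
Proof. by move=> h0 h1; rewrite fineK // ge0_fin_numE // (le_lt_trans h1) // ltry. Qed.

Lemma sum_le_size (s : seq nat) (f : nat -> R) : (forall k, f k <= 1) ->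
  \sum_(k <- s) f k <= (size s)%:R.
Proof.
move=> hf; elim: s => [|a s IH]; first by rewrite big_nil.
by rewrite big_cons /= -add1n natrD lerD.
Qed.

Lemma setC_meas_eq k i : measurable [set w | ~ (eta k w = i)].
Proof. exact: measurableC (eta_meas k i). Qed.

Lemma iota_set_meas n m (G : nat -> set T) : (forall k, measurable (G k)) ->
  measurable [set w | forall k, k \in iota n m -> G k w].
Proof.
move=> mG.
have -> : [set w | forall k, k \in iota n m -> G k w] =
    \bigcap_k (if k \in iota n m then G k else setT).
  apply/seteqP; split => w /= h k.
    by move=> _; case: ifPn => // kn; exact: h.
  by move=> kn; have := h k I; rewrite kn.
by apply: bigcapT_measurable => k; case: ifP => _ //; exact: mG.
Qed.

Variable i0 : nat.
Hypothesis hdiv : (\sum_(0 <= k <oo) pik P eta i0 k)%E = +oo%E.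

Definition r k := fine (pik P eta i0 k).

Lemma pik_r k : pik P eta i0 k = (r k)%:E.
Proof. exact: fin01 (pik_ge0 _ _) (pik_le1 _ _). Qed.

Lemma r01 k : 0 <= r k <= 1.
Proof. by have := pik_ge0 i0 k; have := pik_le1 i0 k; rewrite pik_r !lee_fin => -> ->. Qed.

Lemma div_unbounded (M : R) : exists N, M <= \sum_(k <- iota 0 N) r k.
Proof.
apply: contrapT => hn.
have hlt : forall N, \sum_(k <- iota 0 N) r k < M.
  move=> N; rewrite ltNge; apply/negP => h; apply: hn; by exists N.
have : (\sum_(0 <= k <oo) pik P eta i0 k <= M%:E)%E.
  apply: (@lime_le _ _ _ R).
    by apply: is_cvg_nneseries => n _ _; exact: pik_ge0.
  apply: nearW => N; rewrite /index_iota subn0.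
  under eq_bigr do rewrite pik_r.
  by rewrite sumEFin lee_fin ltW.
by rewrite hdiv leye_eq.
Qed.

Lemma tail_unbounded n (t : R) : exists m, t <= \sum_(k <- iota n m) r k.
Proof.
have [N hN] := div_unbounded (t + n%:R).
exists N.
have r0 : forall k, 0 <= r k by move=> k; have /andP[] := r01 k.
have h1 : \sum_(k <- iota 0 N) r k <= \sum_(k <- iota 0 (n + N)) r k.
  rewrite addnC iotaD big_cat /= lerDl.
  by apply: sumr_ge0 => k _.
have h2 : \sum_(k <- iota 0 n) r k <= n%:R.
  by rewrite -[X in _ <= X%:R](size_iota 0 n); apply: sum_le_size => k; have /andP[] := r01 k.
move: h1; rewrite iotaD big_cat /= add0n => h1.
lra.
Qed.

Lemma Dn_null n :
  P (\bigcap_(j in [set j | (n <= j)%N]) ~` [set w | eta j w = i0]) = 0%E.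
Proof.
set D := \bigcap_(j in _) _.
have mD : measurable D.
  by apply: bigcap_measurable; [exists n => /= | move=> k _; exact: setC_meas_eq].
have hB : forall m, (P D <= ((\prod_(k <- iota n m) (1 - r k)))%:E)%E.
  move=> m.
  set B := [set w | forall k, k \in iota n m -> (~` [set i0]) (eta k w)].
  have mB : measurable B by apply: iota_set_meas => k; exact: setC_meas_eq.
  have hi := eta_indep (fun _ => ~` [set i0]) (iota_uniq n m).
  apply: le_trans (_ : (P D <= P B)%E) _.
    apply: le_measure; rewrite ?inE //.
    move=> w hw k; rewrite mem_iota => /andP[nk _]; exact: hw.
  rewrite /B hi -prodEFin le_eqVlt; apply/orP; left; apply/eqP; apply: eq_bigr => k _.
  rewrite (_ : [set w | (~` [set i0]) (eta k w)] = ~` [set w | eta k w = i0]) //.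
  by rewrite probability_setC // -/(pik P eta i0 k) pik_r EFinB.
have hP := fin01 (measure_ge0 P D) (probability_le1 P mD).
rewrite hP; congr (_%:E).
set c := fine (P D) in hP *.
have c0 : 0 <= c by rewrite -lee_fin -hP measure_ge0.
apply/eqP; rewrite eq_le c0 andbT; apply/negP => /negP; rewrite -ltNge => cpos.
have [m hm] := tail_unbounded n c^-1.
have := hB m; rewrite hP lee_fin => hc.
have := prod_sum_le (iota n m) r01.
set p := \prod_(k <- _) _ in hc *; set S := \sum_(k <- _) _ in hm *.
have S0 : 0 <= S by apply: sumr_ge0 => k _; have /andP[] := r01 k.
have e : c * c^-1 = 1 by rewrite mulfV // lt0r_neq0.
nra.
Qed.

Definition Ev j := [set w | eta j w = i0].

Lemma compl_one (A : set T) : measurable A -> P (~` A) = 0%E -> P A = 1%E.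
Proof.
move=> mA h; move: h; rewrite probability_setC //.
rewrite (fin01 (measure_ge0 P A) (probability_le1 P mA)) -EFinB => /eqP.
by rewrite eqe subr_eq0 => /eqP <-.
Qed.

Lemma limsup_meas (F : nat -> set T) : (forall k, measurable (F k)) -> measurable (lim_sup_set F).
Proof.
move=> mF; apply: bigcapT_measurable => n; apply: bigcup_measurable => k _; exact: mF.
Qed.

Lemma BC2 : P (lim_sup_set Ev) = 1%E.
Proof.
have mL : measurable (lim_sup_set Ev) by apply: limsup_meas => k; exact: eta_meas.
apply: compl_one => //.
set D := fun n => \bigcap_(j in [set j | (n <= j)%N]) ~` [set w | eta j w = i0].
have mD : forall n, measurable (D n).
  by move=> n; apply: bigcap_measurable; [exists n => /= | move=> k _; exact: setC_meas_eq].
have hs : ~` lim_sup_set Ev `<=` \bigcup_n D n.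
  move=> w /= hw; apply: contrapT => hn; apply: hw => n _.
  apply: contrapT => hn'; apply: hn; exists n => // j /= nj ej.
  by apply: hn'; exists j.
have h1 : (P (~` lim_sup_set Ev) <= \sum_(0 <= n <oo) P (D n))%E :=
  measure_sigma_subadditive P mD (measurableC mL) hs.
apply/eqP; rewrite eq_le measure_ge0 andbT.
apply: le_trans h1 _; rewrite eseries0 // => n _ _; exact: Dn_null.
Qed.

Lemma i0_pos : (0 < i0)%N.
Proof.
rewrite lt0n; apply/negP => /eqP i00; move: hdiv; rewrite eseries0 //.
move=> k _ _; rewrite /pik i00.
suff -> : [set w | eta k w = 0%N] = set0 by rewrite measure0.
by apply/seteqP; split => w //= h; have := eta_pos k w; rewrite h.
Qed.

Lemma Xpre_N : X @^-1` @Nset R i0 = lim_sup_set Ev.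
Proof.
apply/seteqP; split => w /= h n _.
  have [j /= nj hj] := h n I; exists j => //.
  have := (W_Sg R i0_pos j (incrQ w) (incrQ w).1).1 hj.
  by rewrite /Q gap_psumf.
have [j /= nj hj] := h n I; exists j => //.
apply: (W_Sg R i0_pos j (incrQ w) (incrQ w).1).2.
by rewrite /Q gap_psumf.
Qed.

Lemma singular : ~ (0 < prod_pmax P eta)%E -> singular_continuous_distr P X.
Proof.
move=> hp; split; first exact: atoms0.
exists (@Nset R i0); split; first exact: Nset_meas.
split; first by have := Nset_null R i0_pos.
by rewrite Xpre_N; exact: BC2.
Qed.

Lemma discrete : (0 < prod_pmax P eta)%E -> purely_discrete_distr P X.
Proof.
move=> hc.
have cle : forall n, (prod_pmax P eta <= pp n)%E.
  by move=> n; rewrite prod_pmaxE; apply: ereal_inf_lbound; exists n.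
have c1 : (prod_pmax P eta <= 1)%E by have := cle 0%N; rewrite /pp big_ord0.
have hcE := fin01 (ltW hc) c1.
set c := fine (prod_pmax P eta) in hcE.
have cpos : 0 < c by rewrite -lte_fin -hcE.
set y := fun k => fine (pmax P eta k).
have yE : forall k, pmax P eta k = (y k)%:E.
  by move=> k; exact: fin01 (pmax_ge0 k) (pmax_le1 k).
have y01 : forall k, 0 <= 1 - y k <= 1.
  move=> k; have := pmax_ge0 k; have := pmax_le1 k; rewrite yE !lee_fin => h1 h0.
  by apply/andP; split; lra.
have hsum : forall n, \sum_(k <- iota 0 n) (1 - y k) <= c^-1.
  move=> n; have := cle n; rewrite hcE pp_iota.
  under eq_bigr do rewrite yE.
  rewrite prodEFin lee_fin => hcp.
  have := prod_sum_le (iota 0 n) y01.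
  under eq_bigr do rewrite opprB addrC subrK.
  set p := \prod_(k <- _) _ in hcp *; set S := \sum_(k <- _) _.
  have S0 : 0 <= S by apply: sumr_ge0 => k _; have /andP[] := y01 k.
  have e : c * c^-1 = 1 by rewrite mulfV // lt0r_neq0.
  have ci : 0 < c^-1 by rewrite invr_gt0.
  nra.
have hm : forall k, exists i, ((y k - (2^-1)^+k.+1)%:E < pik P eta i k)%E.
  move=> k.
  have : ((y k - (2^-1)^+k.+1)%:E < pmax P eta k)%E.
    by rewrite yE lte_fin ltrBlDr ltrDl exprn_gt0 // invr_gt0.
  by rewrite /pmax => /ereal_sup_gt [_ [i _ <-] hi]; exists i.
have [m hm'] := choice hm.
set F := fun k => ~` [set w | eta k w = m k].
have mF : forall k, measurable (F k) by move=> k; exact: setC_meas_eq.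
have PF : forall k, (P (F k) <= ((1 - y k) + (2^-1)^+k.+1)%:E)%E.
  move=> k; rewrite probability_setC //.
  have := hm' k; rewrite -/(pik P eta (m k) k).
  rewrite (fin01 (pik_ge0 (m k) k) (pik_le1 (m k) k)) lte_fin -EFinB lee_fin => h.
  lra.
have hsumF : (\sum_(0 <= k <oo) P (F k) < +oo)%E.
  apply: (@le_lt_trans _ _ (c^-1 + 1)%:E); last exact: ltry.
  apply: (@lime_le _ _ _ R).
    by apply: is_cvg_nneseries => n _ _; exact: measure_ge0.
  apply: nearW => N.
  apply: le_trans (_ : (\sum_(0 <= k < N) ((1 - y k) + (2^-1)^+k.+1)%:E <= _)%E).
    by apply: lee_sum => k _; exact: PF.
  rewrite sumEFin lee_fin big_split /=.
  have h1 := hsum N; rewrite /index_iota subn0 in h1 *.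
  have h2 : \sum_(k <- iota 0 N) (2^-1)^+k.+1 <= 1 :> R.
    under eq_bigr do rewrite exprS.
    rewrite -mulr_sumr.
    have := geo_sum R N; rewrite /index_iota subn0 => ->.
    have : 0 <= (2^-1)^+N :> R by rewrite exprn_ge0 // invr_ge0.
    lra.
  lra.
have PL0 : P (lim_sup_set F) = 0%E := lim_sup_set_cvg0 mF hsumF.
set ext := fun (l : seq nat) k => if (k < size l)%N then nth 0%N l k else m k.
set h := fun l => W (psumf (ext l)) : R.
have ev : forall w, ~ lim_sup_set F w -> exists l, X w = h l.
  move=> w hw.
  have [n hn] : exists n, forall j, (n <= j)%N -> eta j w = m j.
    apply: contrapT => hn; apply: hw => n _.
    apply: contrapT => hn'; apply: hn; exists n => j nj.
    by apply: contrapT => ej; apply: hn'; exists j.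
  exists (map (fun k => eta k w) (iota 0 n)).
  rewrite X_W /h /Q; congr W; apply/funext => j; rewrite /psumf.
  apply: eq_bigr => k _; rewrite /ext size_map size_iota.
  case: ltnP => kn; last by rewrite hn.
  by rewrite (nth_map 0%N) ?size_iota // nth_iota.
exists (range h); split.
  apply/countable_injP.
  exists (fun x => pickle (xget [::] [set l | h l = x])).
  move=> x1 x2; rewrite !inE => -[lx _ hx] [ly _ hy]; rewrite -hx -hy => e.
  have ex : h (xget [::] [set l | h l = h lx]) = h lx by apply: (@xgetPex _ [::] [set l | h l = h lx]); exists lx.
  have ey : h (xget [::] [set l | h l = h ly]) = h ly by apply: (@xgetPex _ [::] [set l | h l = h ly]); exists ly.
  by rewrite -ex -ey (pcan_inj pickleK e).
set G := fun n => if @unpickle (seq nat) n is Some l then X @^-1` [set h l] else set0.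
have eG : X @^-1` range h = \bigcup_n G n.
  apply/seteqP; split => w /=.
    by move=> [l _ e]; exists (pickle l) => //; rewrite /G pickleK /=.
  move=> [n _]; rewrite /G; case: (unpickle n) => // l /= e.
  by exists l.
have mC : measurable (X @^-1` range h).
  rewrite eG; apply: bigcupT_measurable => n; rewrite /G.
  by case: (unpickle n) => [l|]; [exact: atom_meas|exact: measurable0].
have mL : measurable (lim_sup_set F) by exact: limsup_meas.
apply/eqP; rewrite eq_le probability_le1 //=.
have <- : P (~` lim_sup_set F) = 1%E by rewrite probability_setC // PL0 sube0.
apply: le_measure; rewrite ?inE //; first exact: measurableC.
move=> w hw; have [l e] := ev w hw; by exists l.
Qed.

End Prob.


Unset Implicit Arguments. Set Strict Implicit.

Theorem mainTheorem11 (d : measure_display) (T : measurableType d)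
  (R : realType) (P : probability T R) (eta : nat -> T -> nat)
  (eta_pos : forall k w, (0 < eta k w)%N)
  (eta_meas : forall k i, measurable [set w | eta k w = i])
  (eta_indep : mutually_independent P eta)
  (i0 : nat)
  (hdiv : (\sum_(0 <= k <oo) pik P eta i0 k)%E = +oo%E) :
  (purely_discrete_distr P (eta_sum eta) <-> (0 < prod_pmax P eta)%E) /\
  (~ (0 < prod_pmax P eta)%E ->
     singular_continuous_distr P (eta_sum eta)).
Proof.
split.
  split; last exact: (discrete eta_pos eta_meas).
  move=> hd; case: (boolP (0 < prod_pmax P eta)%E) => // hn; exfalso.
  have h0 := atoms0 eta_pos eta_meas eta_indep (negP hn).
  exact: (not_discrete eta_pos eta_meas h0 hd).
exact: (singular eta_pos eta_meas eta_indep hdiv).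
Qed.
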